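(* Let $0<p<1$ and $\alpha>-1$, and consider the urn transfer process described in the context (the $p_k$-model), assumed well defined, i.e. $0\le p_{k+1}\le 1$ at every stage. Let $B(k)=\sum_{i\ge 1}F_i(k)$ be the total number of balls after $k$ steps. Then for every integer $k>1$, $$E(B(k)) = E\Big(\sum_{i=1}^k F_i(k)\Big) = 1+(k-1)p \quad\text{and}\quad E(p_k)=p.$$
   Context: Urn transfer model ($p_k$-model). There are countably many urns $urn_1,urn_2,\dots$; each ball in $urn_i$ carries $i$ pins. Let $F_i(k)$ be the number of balls in $urn_i$ after $k$ steps. Initially (stage $k=1$) $F_1(1)=1$ and $F_i(1)=0$ for $i>1$. Fix parameters $0<p<1$ and $\alpha>-1$. At stage $k+1$ ($k\ge1$) one of two things happens: (i) with probability $$p_{k+1}=1-\frac{(1-p)\sum_{i=1}^k (i+\alpha)F_i(k)}{k(1+\alpha p)+\alpha(1-p)},$$ a new ball (with one pin) is added to $urn_1$; (ii) with probability $1-p_{k+1}$, an urn is selected, $urn_i$ being chosen with probability $\frac{(1-p)(i+\alpha)F_i(k)}{k(1+\alpha p)+\alpha(1-p)}$ for $1\le i\le k$, and one ball of $urn_i$ is moved to $urn_{i+1}$ (i.e. receives an extra pin). The process is only defined when $0\le p_{k+1}\le1$ at each stage. The total number of pins after $k$ steps is $\sum_i iF_i(k)=k$, and $F_i(k)=0$ for $i>k$. $E$ denotes expectation over the randomness of the process. *)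

(* Defs.v *)
From mathcomp Require Import all_boot all_order all_algebra.
Set Implicit Arguments. Unset Strict Implicit. Unset Printing Implicit Defensive.
Import Order.TTheory GRing.Theory Num.Theory.
Local Open Scope ring_scope.

Section Urn.
Variable R : realFieldType.
Variables (p alpha : R).

(* A configuration is a list s of nats; the number of balls in urn_i (i >= 1)
   is F s i = nth 0 s (i-1).  All urns beyond the list are empty. *)
Definition F (s : seq nat) (i : nat) : nat := nth 0%N s i.-1.

Definition B (s : seq nat) : nat := sumn s.

Definition denom (k : nat) : R := k%:R * (1 + alpha * p) + alpha * (1 - p).

(* p_{k+1}, computed from the configuration s after k steps *)
Definition pnext (k : nat) (s : seq nat) : R :=
  1 - (1 - p) * (\sum_(1 <= i < k.+1) (i%:R + alpha) * (F s i)%:R) / denom k.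

Definition qsel (k : nat) (s : seq nat) (i : nat) : R :=
  (1 - p) * (i%:R + alpha) * (F s i)%:R / denom k.

Definition add_ball (s : seq nat) : seq nat := incr_nth s 0.

Definition move_ball (s : seq nat) (i : nat) : seq nat :=
  incr_nth (set_nth 0%N s i.-1 (nth 0%N s i.-1).-1) i.

Definition step (k : nat) (x : R * seq nat) : seq (R * seq nat) :=
  (x.1 * pnext k x.2, add_ball x.2)
    :: [seq (x.1 * qsel k x.2 i, move_ball x.2 i) | i <- iota 1 k].

(* law of the configuration after k steps (k >= 1), as a list of
   (probability, configuration) pairs; stage 1: F_1(1) = 1, others 0 *)
Fixpoint law (k : nat) : seq (R * seq nat) :=
  match k with
  | 0 => [:: (1, [:: 1%N])]
  | 1 => [:: (1, [:: 1%N])]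
  | k'.+1 => flatten [seq step k' x | x <- law k']
  end.

Definition Exp (k : nat) (f : seq nat -> R) : R :=
  \sum_(x <- law k) x.1 * f x.2.

Definition well_defined : Prop :=
  forall k : nat, (1 <= k)%N -> forall x, x \in law k -> 0 < x.1 ->
    0 <= pnext k x.2 <= 1.

End Urn.

(* Main.v *)
Require Import Defs.
From mathcomp Require Import all_boot all_order all_algebra.
From mathcomp Require Import zify ring lra.
Import Order.TTheory GRing.Theory Num.Theory.
Local Open Scope ring_scope.

Fixpoint wsf (n : nat) (s : seq nat) : nat :=
  match s with [::] => 0%N | x :: s' => (n * x + wsf n.+1 s')%N end.

Lemma wsf_incr n s i : wsf n (incr_nth s i) = (wsf n s + (n + i))%N.
Proof.
elim: s n i => [|x s IH] n i.
  have h : forall j m, wsf m (ncons j 0%N [:: 1%N]) = (m + j)%N.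
    by elim=> [|j IHj] m /=; [lia | rewrite IHj; lia].
  by case: i => [|i] /=; [lia | rewrite h; lia].
case: i => [|i] /=; first by lia.
by rewrite IH; lia.
Qed.

Lemma wsf_dec n s i : (0 < nth 0%N s i)%N ->
  (wsf n (set_nth 0%N s i (nth 0%N s i).-1) + (n + i))%N = wsf n s.
Proof.
elim: s n i => [|x s IH] n i; first by rewrite nth_nil.
case: i => [|i] /=.
  by case: x => // x _; lia.
by move=> h; rewrite -(IH n.+1 i h); lia.
Qed.

Lemma sumn_incr s i : sumn (incr_nth s i) = (sumn s).+1.
Proof.
elim: s i => [|x s IH] i.
  have h : forall j, sumn (ncons j 0%N [:: 1%N]) = 1%N.
    by elim=> [|j IHj] //=.
  by case: i => [|i] //=; rewrite h.
case: i => [|i] /=; first by lia.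
by rewrite IH; lia.
Qed.

Lemma sumn_dec s i : (0 < nth 0%N s i)%N ->
  (sumn (set_nth 0%N s i (nth 0%N s i).-1)).+1 = sumn s.
Proof.
elim: s i => [|x s IH] i; first by rewrite nth_nil.
case: i => [|i] /=.
  by case: x => // x _; lia.
by move=> h; rewrite -(IH i h); lia.
Qed.

Lemma sumN s N : (size s <= N)%N -> (\sum_(0 <= j < N) nth 0%N s j)%N = sumn s.
Proof.
elim: s N => [|x s IH] N.
  by move=> _; rewrite big1 // => j _; rewrite nth_nil.
case: N => [|N] //= h.
by rewrite big_nat_recl //= IH.
Qed.

Section Main.
Variable R : realFieldType.
Variables (p alpha : R).

Lemma sumR_ws n s N : (size s <= N)%N ->
  \sum_(0 <= j < N) (((n + j)%N)%:R + alpha) * (nth 0%N s j)%:R =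
  (wsf n s)%:R + alpha * (sumn s)%:R.
Proof.
elim: s n N => [|x s IH] n N.
  by move=> _; rewrite big1 /= ?mulr0 ?addr0 // => j _; rewrite nth_nil mulr0.
case: N => [|N] //= h.
rewrite big_nat_recl //=.
rewrite (eq_bigr (fun j => (((n.+1 + j)%N)%:R + alpha) * (nth 0%N s j)%:R)); last first.
  by move=> j _; rewrite addSnnS.
rewrite IH // !natrD !natrM ?addn0.
ring.
Qed.

Lemma F_shift (G : nat -> R) s k :
  \sum_(1 <= i < k.+1) G (F s i) = \sum_(0 <= j < k) G (nth 0%N s j).
Proof. by rewrite big_add1 /=. Qed.

Lemma F_shiftN s k :
  (\sum_(1 <= i < k.+1) F s i)%N = (\sum_(0 <= j < k) nth 0%N s j)%N.
Proof. by rewrite big_add1 /=. Qed.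

Notation law := (law p alpha).
Notation Exp := (Exp p alpha).
Notation pnext := (pnext p alpha).
Notation qsel := (qsel p alpha).
Notation denom := (denom p alpha).

Lemma law_S k : (0 < k)%N -> law k.+1 = flatten [seq step p alpha k x | x <- law k].
Proof. by case: k. Qed.

Lemma Exp_S k f : (0 < k)%N -> Exp k.+1 f = Exp k (fun s => pnext k s * f (add_ball s)
   + \sum_(i <- iota 1 k) qsel k s i * f (move_ball s i)).
Proof.
move=> hk; rewrite /Exp law_S // big_flatten /= big_map; apply: eq_bigr => x _.
rewrite /step big_cons big_map [RHS]mulrDr [in RHS]mulr_sumr; congr (_ + _).
  by rewrite mulrA.
by apply: eq_bigr => i _; rewrite mulrA.
Qed.

Lemma Exp_ext k f g : (forall x, x \in law k -> x.1 != 0 -> f x.2 = g x.2) ->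
  Exp k f = Exp k g.
Proof.
move=> H; rewrite /Exp big_seq [in RHS]big_seq; apply: eq_bigr => x hx.
case: (eqVneq x.1 0) => [->|nz]; first by rewrite !mul0r.
by rewrite H.
Qed.

Lemma Exp_lin k a b f : Exp k (fun s => a + b * f s) = a * Exp k (fun _ => 1) + b * Exp k f.
Proof.
rewrite /Exp !mulr_sumr -big_split; apply: eq_bigr => x _ /=; ring.
Qed.

Lemma iota_nat k : iota 1 k = index_iota 1 k.+1.
Proof. by rewrite /index_iota subn1. Qed.

Lemma qsel_sum k s : \sum_(i <- iota 1 k) qsel k s i =
  (1 - p) * (\sum_(1 <= i < k.+1) (i%:R + alpha) * (F s i)%:R) / denom k.
Proof.
rewrite iota_nat mulr_sumr mulr_suml; apply: eq_bigr => i _.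
by rewrite /qsel !mulrA.
Qed.

Lemma step_mass k s : pnext k s + \sum_(i <- iota 1 k) qsel k s i = 1.
Proof. rewrite qsel_sum /pnext; ring. Qed.

Lemma law_good k : (0 < k)%N -> forall x, x \in law k -> x.1 != 0 ->
  (size x.2 <= k)%N /\ wsf 1 x.2 = k.
Proof.
elim: k => // k IH _.
case: (posnP k) => [->|hk].
  by move=> x; rewrite inE => /eqP -> /=.
rewrite law_S // => x /flattenP [st /mapP [[y1 y2] hy ->] hx] nz.
rewrite /step in_cons in hx; case/orP: hx => [/eqP xe | /mapP [i hi xe]];
  rewrite xe /= in nz *.
- have ny : y1 != 0 by apply: contraNneq nz => ->; rewrite mul0r.
  have [/= hs hw] := IH hk (y1, y2) hy ny.
  rewrite /add_ball size_incr_nth wsf_incr /= hw; split; last by lia.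
  by case: ifP => _; lia.
- have ny : y1 != 0 by apply: contraNneq nz => ->; rewrite mul0r.
  have [/= hs hw] := IH hk (y1, y2) hy ny.
  have nF : (0 < nth 0%N y2 i.-1)%N.
    rewrite lt0n; apply: contraNneq nz => hF.
    by rewrite /qsel /F hF mulr0 mul0r mulr0.
  move: hi; rewrite mem_iota => /andP [hi1 hi2].
  have := @wsf_dec 1 _ _ nF.
  rewrite /move_ball size_incr_nth wsf_incr size_set_nth => hd.
  split; last by lia.
  by case: ifP => _; lia.
Qed.

Lemma Exp_one k : (0 < k)%N -> Exp k (fun _ => 1) = 1.
Proof.
elim: k => // k IH _.
case: (posnP k) => [->|hk]; first by rewrite /Exp /= big_seq1 mulr1.
rewrite Exp_S // -[RHS](IH hk); apply: eq_bigr => x _; congr (_ * _).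
by rewrite mulr1 (eq_bigr (fun i => qsel k x.2 i)) ?step_mass // => i _; rewrite mulr1.
Qed.

Lemma Exp_B_step k : (0 < k)%N ->
  Exp k.+1 (fun s => (B s)%:R) = Exp k (fun s => (B s)%:R) + Exp k (pnext k).
Proof.
move=> hk; rewrite Exp_S // /Exp -big_split; apply: eq_bigr => x _ /=.
rewrite (eq_bigr (fun i => qsel k x.2 i * (B x.2)%:R)); last first.
  move=> i _; case: (posnP (nth 0%N x.2 i.-1)) => hF.
    by rewrite /qsel /F hF mulr0 mul0r !mul0r.
  rewrite /move_ball /B sumn_incr -(@sumn_dec _ _ hF) //.
rewrite -mulr_suml.
have -> : \sum_(i <- iota 1 k) qsel k x.2 i = 1 - pnext k x.2.
  by rewrite -(step_mass k x.2); ring.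
rewrite /add_ball /B sumn_incr mulrSr; ring.
Qed.

Lemma denom_gt0 m : 0 < p -> p < 1 -> -1 < alpha -> 0 < denom m.+1.
Proof.
move=> hp0 hp1 ha; rewrite /denom.
have hm : 0 <= (m%:R : R) by rewrite ler0n.
have hmp : 0 <= (m%:R : R) * p by apply: mulr_ge0; lra.
have c0 : 0 < m%:R * p + 1 by lra.
have c1 : 0 < (alpha + 1) * (m%:R * p + 1) by apply: mulr_gt0; lra.
have c2 : 0 <= m%:R * (1 - p) by apply: mulr_ge0; lra.
rewrite mulrSr.
nra.
Qed.

Lemma Epnext m : 0 < p -> p < 1 -> -1 < alpha ->
  Exp m.+1 (fun s => (B s)%:R) = 1 + m%:R * p -> Exp m.+1 (pnext m.+1) = p.
Proof.
move=> hp0 hp1 ha EB.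
have hd := denom_gt0 m hp0 hp1 ha.
set S := fun s : seq nat => \sum_(1 <= i < m.+2) (i%:R + alpha) * (F s i)%:R.
have -> : Exp m.+1 (pnext m.+1) =
   Exp m.+1 (fun s => 1 + (- ((1 - p) / denom m.+1)) * S s).
  by apply: eq_bigr => x _; rewrite /pnext /S; congr (_ * _); ring.
rewrite Exp_lin Exp_one //.
have -> : Exp m.+1 S = Exp m.+1 (fun s => (m.+1)%:R + alpha * (B s)%:R).
  apply: Exp_ext => x hx nz.
  have [hs hw] := @law_good _ (ltn0Sn m) _ hx nz.
  rewrite /S big_add1 /=.
  rewrite (eq_bigr (fun j => (((1 + j)%N)%:R + alpha) * (nth 0%N x.2 j)%:R)) //.
  by rewrite sumR_ws // hw.
rewrite Exp_lin Exp_one // EB.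
have -> : (m.+1)%:R * 1 + alpha * (1 + m%:R * p) = denom m.+1.
  by rewrite /denom mulrSr; ring.
rewrite mulNr mulfVK ?gt_eqF //; ring.
Qed.

Lemma EB m : 0 < p -> p < 1 -> -1 < alpha ->
  Exp m.+1 (fun s => (B s)%:R) = 1 + m%:R * p.
Proof.
move=> hp0 hp1 ha; elim: m => [|m IH].
  by rewrite /Exp /= big_seq1 /B /= mul1r mul0r addr0.
rewrite Exp_B_step // IH Epnext // mulrSr; ring.
Qed.

End Main.

Theorem lemmaA1 (R : realFieldType) (p alpha : R)
  (hp0 : 0 < p) (hp1 : p < 1) (halpha : -1 < alpha)
  (hwd : well_defined p alpha) (k : nat) (hk : (1 < k)%N) :
  Exp p alpha k (fun s => (B s)%:R) = 1 + (k.-1)%:R * p /\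
  Exp p alpha k (fun s => (\sum_(1 <= i < k.+1) F s i)%:R) = 1 + (k.-1)%:R * p /\
  Exp p alpha k.-1 (pnext p alpha k.-1) = p.
Proof.
case: k hk => [|[|m]] // _ /=.
have E := @EB R p alpha m.+1 hp0 hp1 halpha.
split; first exact: E.
split.
  rewrite -E; apply: Exp_ext => x hx nz.
  have [hs _] := @law_good _ _ _ _ (ltn0Sn m.+1) _ hx nz.
  by rewrite F_shiftN sumN.
exact: (@Epnext R p alpha m hp0 hp1 halpha (@EB R p alpha m hp0 hp1 halpha)).
Qed.
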